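(* Let $M$ be a non-trivial finitely generated indecomposable $\langle t\rangle$-module. Then its graph $\Gamma_M$ is of type 1, type 2, or type 3.
   Context: $\langle t\rangle=\{0,1,t,t^2,\dots\}$ is the free commutative monoid with zero on one generator. A $\langle t\rangle$-module is a pointed set $(M,* )$ with an action of $\langle t\rangle$ such that $1m=m$, $a(bm)=(ab)m$, $0m=*$; it is finitely generated if there are $m_1,\dots,m_k$ with every element of the form $t^jm_i$ or $*$; it is non-trivial if $M\ne\{*\}$; it is indecomposable if it is not isomorphic to a wedge sum $M'\oplus M''$ (disjoint union with basepoints identified) of two non-trivial modules. The graph $\Gamma_M$ is the directed graph with vertex set $M\setminus\{*\}$ and an edge $m\to tm$ for every $m\in M\setminus\{*\}$ with $tm\ne *$; each vertex has at most one outgoing edge. A leaf is a vertex with no incoming edge, a root a vertex with no outgoing edge. $\Gamma_M$ is of type 1 if it is a rooted tree: its underlying undirected graph is a tree with a unique root, and from every vertex there is a unique directed path to the root. It is of type 2 if it is obtained from a (finite) rooted tree by joining its root by an edge to the initial vertex of the infinite directed ray $v_0\to v_1\to v_2\to\cdots$ (the graph $\Gamma_{\langle t\rangle}$). It is of type 3 if it is obtained from an oriented directed cycle by attaching rooted trees to vertices of the cycle (each tree's root having an outgoing edge into the cycle). *)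

(* Defs.v *)
From Stdlib Require Import List Arith.
Import ListNotations.

(* The monoid <t> = {0,1,t,t^2,...}: None is 0, Some j is t^j. *)
Definition tmon := option nat.

Definition tmul (a b : tmon) : tmon :=
  match a, b with
  | Some i, Some j => Some (i + j)
  | _, _ => None
  end.

Record tmodule := TModule {
  car : Type;
  pt : car;
  act : tmon -> car -> car;
  act_one : forall m, act (Some 0) m = m;
  act_mul : forall a b m, act a (act b m) = act (tmul a b) m;
  act_zero : forall m, act None m = pt
}.

Definition tact (M : tmodule) (m : car M) : car M := act M (Some 1) m.

Definition nontrivial (M : tmodule) : Prop := exists m : car M, m <> pt M.

Definition finitely_generated (M : tmodule) : Prop :=
  exists gens : list (car M),
    forall m : car M, m = pt M \/
      exists g j, In g gens /\ m = act M (Some j) g.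

Definition is_hom (M1 M2 : tmodule) (f : car M1 -> car M2) : Prop :=
  f (pt M1) = pt M2 /\ forall a x, f (act M1 a x) = act M2 a (f x).

(* M is isomorphic to the wedge sum M1 (+) M2: the map M1 (+) M2 -> M
   induced by module maps f1, f2 is bijective (its inverse is then
   automatically a module map). *)
Definition iso_to_wedge (M1 M2 M : tmodule)
  (f1 : car M1 -> car M) (f2 : car M2 -> car M) : Prop :=
  is_hom M1 M f1 /\ is_hom M2 M f2 /\
  (forall x y, f1 x = f1 y -> x = y) /\
  (forall x y, f2 x = f2 y -> x = y) /\
  (forall x y, f1 x = f2 y -> x = pt M1 /\ y = pt M2) /\
  (forall m, (exists x, f1 x = m) \/ (exists y, f2 y = m)).

Definition indecomposable (M : tmodule) : Prop :=
  ~ exists (M1 M2 : tmodule) f1 f2,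
      nontrivial M1 /\ nontrivial M2 /\ iso_to_wedge M1 M2 M f1 f2.

(* Since each vertex has at most one outgoing edge, a directed
   path from v to w (w a vertex) is exactly an iterate: tʲ v = w. *)
Definition vertex (M : tmodule) (m : car M) : Prop := m <> pt M.

Definition edge (M : tmodule) (u w : car M) : Prop :=
  vertex M u /\ vertex M w /\ w = tact M u.

Definition titer (M : tmodule) (n : nat) (v : car M) : car M :=
  Nat.iter n (tact M) v.

Definition dpath (M : tmodule) (n : nat) (v w : car M) : Prop :=
  vertex M v /\ vertex M w /\ titer M n v = w.

(* Type 1: a rooted tree: a (unique) root r, reached by a directed path
   from every vertex. *)
Definition graph_type1 (M : tmodule) : Prop :=
  exists r, vertex M r /\ tact M r = pt M /\
    forall v, vertex M v -> exists n, dpath M n v r.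

(* Type 2: a finite rooted tree (root r) whose root is joined by an edge to
   the start v0 of an infinite directed ray v0 -> v1 -> ... . *)
Definition on_ray (M : tmodule) (v0 x : car M) : Prop :=
  exists i, titer M i v0 = x.

Definition graph_type2 (M : tmodule) : Prop :=
  exists r v0,
    vertex M r /\ edge M r v0 /\
    (forall i, vertex M (titer M i v0)) /\
    (forall i j, titer M i v0 = titer M j v0 -> i = j) /\
    (exists l : list (car M),
        forall v, vertex M v -> ~ on_ray M v0 v -> In v l) /\
    (forall v, vertex M v -> ~ on_ray M v0 v -> exists n, dpath M n v r).

(* Type 3: an oriented cycle c_0 -> c_1 -> ... -> c_{k-1} -> c_0 (k >= 1)
   with rooted trees attached: every vertex has a directed path into the
   cycle. *)
Definition graph_type3 (M : tmodule) : Prop :=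
  exists c : list (car M),
    c <> [] /\ NoDup c /\
    (forall x, In x c -> vertex M x) /\
    (forall i, i < length c ->
        tact M (nth i c (pt M)) = nth ((S i) mod length c) c (pt M)) /\
    (forall v, vertex M v -> exists n w, In w c /\ dpath M n v w).

(* Main.v *)
Require Import Defs.
From Stdlib Require Import List Arith Lia Classical ProofIrrelevance.
Import ListNotations.

Lemma titer_add (M : tmodule) a b x : titer M a (titer M b x) = titer M (a+b) x.
Proof.
  unfold titer. induction a as [|a IH]; simpl; [reflexivity|]. rewrite IH; reflexivity.
Qed.

Lemma titer_S_r (M : tmodule) n x : titer M n (tact M x) = titer M (S n) x.
Proof.
  change (tact M x) with (titer M 1 x). rewrite titer_add. f_equal; lia.
Qed.

Lemma tact_pt (M : tmodule) : tact M (pt M) = pt M.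
Proof.
  unfold tact. transitivity (act M (Some 1) (act M None (pt M))).
  - rewrite act_zero; reflexivity.
  - rewrite act_mul; simpl; apply act_zero.
Qed.

Lemma titer_pt (M : tmodule) n : titer M n (pt M) = pt M.
Proof.
  induction n as [|n IH]; [reflexivity|].
  change (titer M (S n) (pt M)) with (tact M (titer M n (pt M))).
  rewrite IH; apply tact_pt.
Qed.

Lemma act_titer (M : tmodule) j x : act M (Some j) x = titer M j x.
Proof.
  induction j as [|j IH]; [apply act_one|].
  change (Some (S j)) with (tmul (Some 1) (Some j)).
  rewrite <- act_mul, IH. reflexivity.
Qed.

Definition QClosed (M : tmodule) (Q : car M -> Prop) :=
  forall x, x <> pt M -> tact M x <> pt M -> Q x -> Q (tact M x).

Lemma closed_act (M : tmodule) Q (HQ : QClosed M Q) a x :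
  x = pt M \/ Q x -> act M a x = pt M \/ Q (act M a x).
Proof.
  destruct a as [j|].
  - rewrite act_titer. induction j as [|j IH]; intro H; [exact H|].
    specialize (IH H).
    change (titer M (S j) x) with (tact M (titer M j x)).
    destruct IH as [E|Hq].
    + left; rewrite E; apply tact_pt.
    + destruct (classic (titer M j x = pt M)) as [E|E].
      * left; rewrite E; apply tact_pt.
      * destruct (classic (tact M (titer M j x) = pt M)) as [E'|E'];
          [left; exact E' | right; apply HQ; auto].
  - intros; left; apply act_zero.
Qed.

Lemma sub_eq (T : Type) (P : T -> Prop) (x y : {z | P z}) :
  proj1_sig x = proj1_sig y -> x = y.
Proof.
  destruct x as [x px], y as [y py]; simpl; intros E; subst y.
  f_equal; apply proof_irrelevance.
Qed.

Definition submod (M : tmodule) (Q : car M -> Prop) (HQ : QClosed M Q) : tmodule.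
Proof.
  refine (TModule {x : car M | x = pt M \/ Q x}
    (exist _ (pt M) (or_introl eq_refl))
    (fun a x => exist _ (act M a (proj1_sig x))
        (closed_act M Q HQ a (proj1_sig x) (proj2_sig x))) _ _ _).
  - intros [m pm]; apply sub_eq; simpl; apply act_one.
  - intros a b [m pm]; apply sub_eq; simpl; apply act_mul.
  - intros [m pm]; apply sub_eq; simpl; apply act_zero.
Defined.

Lemma connected (M : tmodule) (P : car M -> Prop) :
  indecomposable M ->
  (forall x, x <> pt M -> tact M x <> pt M -> (P x <-> P (tact M x))) ->
  forall a b, a <> pt M -> b <> pt M -> P a -> P b.
Proof.
  intros Hind Hinv a b Ha Hb Pa. apply NNPP; intro nPb. apply Hind.
  assert (H1 : QClosed M P) by (intros x ? ? ?; apply (Hinv x); auto).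
  assert (H2 : QClosed M (fun x => ~ P x)).
  { intros x Hx Htx nP Pt. apply nP. apply (Hinv x); auto. }
  exists (submod M P H1), (submod M _ H2),
    (fun x : car (submod M P H1) => proj1_sig x),
    (fun x : car (submod M _ H2) => proj1_sig x).
  split; [|split].
  - exists (exist _ a (or_intror Pa) : car (submod M P H1)). intro E. apply Ha.
    exact (f_equal (fun z : car (submod M P H1) => proj1_sig z) E).
  - exists (exist _ b (or_intror nPb) : car (submod M _ H2)). intro E. apply Hb.
    exact (f_equal (fun z : car (submod M _ H2) => proj1_sig z) E).
  - split; [split; [reflexivity | intros; reflexivity]|].
    split; [split; [reflexivity | intros; reflexivity]|].
    split; [intros x y E; apply sub_eq; exact E|].
    split; [intros x y E; apply sub_eq; exact E|].
    split.
    + intros [x px] [y py] E. simpl in E. subst y.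
      destruct (classic (x = pt M)) as [E|E].
      * split; apply sub_eq; simpl; exact E.
      * exfalso. destruct px as [px|px]; [contradiction|].
        destruct py as [py|py]; [contradiction|]. auto.
    + intro m. destruct (classic (P m)) as [p|np].
      * left. exists (exist _ m (or_intror p) : car (submod M P H1)); reflexivity.
      * right. exists (exist _ m (or_intror np) : car (submod M _ H2)); reflexivity.
Qed.

Lemma comp (M : tmodule) v w : indecomposable M -> v <> pt M -> w <> pt M ->
  exists n m, titer M n w = titer M m v /\ titer M n w <> pt M.
Proof.
  intros Hind Hv Hw.
  apply (connected M (fun x => exists n m, titer M n x = titer M m v /\ titer M n x <> pt M)
           Hind) with (a := v); auto.
  - intros x Hx Htx. split.
    + intros [n [m [E Ne]]]. destruct n as [|n].
      * exists 0, (S m). split; [|exact Htx].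
        change (tact M x = tact M (titer M m v)). f_equal; exact E.
      * exists n, m. rewrite titer_S_r. auto.
    + intros [n [m [E Ne]]]. exists (S n), m. rewrite <- titer_S_r. auto.
  - exists 0, 0. split; [reflexivity|exact Hv].
Qed.

Lemma find_root (M : tmodule) n : forall v, v <> pt M -> titer M n v = pt M ->
  exists r, r <> pt M /\ tact M r = pt M /\ exists i, titer M i v = r.
Proof.
  induction n as [|n IH]; intros v Hv Hn.
  - exfalso; apply Hv; exact Hn.
  - destruct (classic (tact M v = pt M)) as [E|E].
    + exists v; split; auto; split; auto; exists 0; reflexivity.
    + destruct (IH (tact M v) E) as [r [Hr [Htr [i Hi]]]].
      * rewrite titer_S_r; exact Hn.
      * exists r; split; auto; split; auto; exists (S i). rewrite <- titer_S_r; exact Hi.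
Qed.

Lemma least_pos (P : nat -> Prop) k : 0 < k -> P k ->
  exists k0, 0 < k0 /\ P k0 /\ forall j, 0 < j < k0 -> ~ P j.
Proof.
  induction k as [k IH] using (well_founded_induction lt_wf). intros Hk Pk.
  destruct (classic (exists j, 0 < j < k /\ P j)) as [[j [Hj Pj]]|N].
  - apply (IH j); [lia|lia|exact Pj].
  - exists k; split; auto; split; auto. intros j Hj Pj; apply N; eauto.
Qed.

Lemma titer_mod (M : tmodule) v K a : 0 < K -> titer M K v = v ->
  titer M a v = titer M (a mod K) v.
Proof.
  intros HK Hv.
  assert (Hq : forall q, titer M (K*q) v = v).
  { induction q as [|q IHq]; [rewrite Nat.mul_0_r; reflexivity|].
    replace (K * S q) with (K + K*q) by lia. rewrite <- titer_add, IHq. exact Hv. }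
  pose proof (Nat.div_mod a K ltac:(lia)) as E.
  rewrite E at 1. rewrite Nat.add_comm, <- titer_add, Hq. reflexivity.
Qed.

Lemma bound_list (T : Type) (R : T -> nat -> nat -> Prop) (Q : T -> Prop) (l : list T) :
  (forall g, In g l -> Q g -> exists n m, R g n m) ->
  exists B, forall g, In g l -> Q g -> exists n m, n <= B /\ m <= B /\ R g n m.
Proof.
  induction l as [|a l IH]; intros H.
  - exists 0; intros g [].
  - destruct IH as [B HB]; [intros g Hg; apply H; right; exact Hg|].
    destruct (classic (Q a)) as [Qa|nQa].
    + destruct (H a (or_introl eq_refl) Qa) as [n0 [m0 R0]].
      exists (max B (max n0 m0)). intros g [<-|Hg] Hq.
      * exists n0, m0; split; [lia|split; [lia|exact R0]].
      * destruct (HB g Hg Hq) as [n [m [? [? ?]]]]. exists n, m; split; [lia|split; [lia|auto]].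
    + exists B. intros g [<-|Hg] Hq; [contradiction|]. apply HB; auto.
Qed.

Theorem mainTheorem9 (M : tmodule) :
  nontrivial M -> finitely_generated M -> indecomposable M ->
  graph_type1 M \/ graph_type2 M \/ graph_type3 M.
Proof.
  intros Hnt Hfg Hind.
  destruct (classic (exists v, v <> pt M /\ exists k, 0 < k /\ titer M k v = v))
    as [[v [Hv [k0 [Hk0 Hkv0]]]] | Hnper].
  { right; right.
    destruct (least_pos (fun k => titer M k v = v) k0 Hk0 Hkv0) as [K [HK [HKv Hmin]]].
    assert (Hnth : forall i d, i < K ->
      nth i (map (fun i => titer M i v) (seq 0 K)) d = titer M i v).
    { intros i d Hi.
      rewrite (nth_indep _ d ((fun i => titer M i v) 0)) by (rewrite length_map, length_seq; lia).
      rewrite (map_nth (fun i => titer M i v) (seq 0 K) 0 i), seq_nth by lia. reflexivity. }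
    assert (Hinj : forall i j, i < K -> j < K -> titer M i v = titer M j v -> i = j).
    { assert (A : forall i j, i < j -> j < K -> titer M i v = titer M j v -> False).
      { intros i j Hij HjK E. apply (Hmin (K - j + i)); [lia|].
        rewrite <- titer_add, E, titer_add. replace (K - j + j) with K by lia. exact HKv. }
      intros i j Hi Hj E. destruct (Nat.lt_total i j) as [h|[h|h]]; auto.
      - exfalso; eapply A; eauto.
      - exfalso; eapply A; [exact h|exact Hi|symmetry; exact E]. }
    exists (map (fun i => titer M i v) (seq 0 K)).
    split; [|split; [|split; [|split]]].
    - destruct K; [lia|]. simpl; discriminate.
    - apply NoDup_map_NoDup_ForallPairs; [|apply seq_NoDup].
      intros a b Ha Hb E. apply in_seq in Ha; apply in_seq in Hb. apply Hinj; auto; lia.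
    - intros x Hx. apply in_map_iff in Hx. destruct Hx as [i [Ei Hi]]. apply in_seq in Hi.
      subst x. intro E. apply Hv. rewrite <- HKv.
      replace K with (K - i + i) by lia. rewrite <- titer_add, E. apply titer_pt.
    - intros i Hi. rewrite length_map, length_seq in Hi |- *.
      rewrite Hnth by exact Hi.
      rewrite Hnth by (apply Nat.mod_upper_bound; lia).
      change (tact M (titer M i v)) with (titer M (S i) v). apply titer_mod; auto.
    - intros w Hw. destruct (comp M v w Hind Hv Hw) as [n [m [E Ne]]].
      exists n, (titer M m v). split.
      + rewrite (titer_mod M v K m HK HKv). apply in_map_iff. exists (m mod K).
        split; [reflexivity|]. apply in_seq.
        pose proof (Nat.mod_upper_bound m K ltac:(lia)). lia.
      + split; [exact Hw|split; [rewrite <- E; exact Ne|exact E]]. }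
  destruct (classic (exists v, v <> pt M /\ exists n, titer M n v = pt M))
    as [[v [Hv [n Hn]]]|Hnz].
  { left. destruct (find_root M n v Hv Hn) as [r [Hr [Htr _]]].
    exists r. split; [exact Hr|split; [exact Htr|]].
    intros w Hw. destruct (comp M r w Hind Hr Hw) as [a [b [E Ne]]].
    destruct b as [|b].
    - exists a. split; [exact Hw|split; [exact Hr|exact E]].
    - exfalso. apply Ne. rewrite E, <- titer_S_r, Htr. apply titer_pt. }
  right; left.
  assert (Hvi : forall v n, v <> pt M -> titer M n v <> pt M).
  { intros v n Hv E. apply Hnz; eauto. }
  assert (Hinj : forall v a b, v <> pt M -> titer M a v = titer M b v -> a = b).
  { assert (A : forall v a b, v <> pt M -> a < b -> titer M a v = titer M b v -> False).
    { intros v a b Hv h E. apply Hnper. exists (titer M a v). split; [apply Hvi; auto|].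
      exists (b - a). split; [lia|]. rewrite titer_add. replace (b - a + a) with b by lia.
      symmetry; exact E. }
    intros v a b Hv E. destruct (Nat.lt_total a b) as [h|[h|h]]; auto.
    - exfalso; eapply A; eauto.
    - exfalso; eapply A; [exact Hv|exact h|symmetry; exact E]. }
  destruct Hnt as [g0 Hg0]. destruct Hfg as [gens Hgens].
  destruct (bound_list _ (fun g n m => titer M n g = titer M m g0) (fun g => g <> pt M) gens)
    as [B HB].
  { intros g _ Hg. destruct (comp M g0 g Hind Hg0 Hg) as [n [m [E _]]]. eauto. }
  assert (Hrep : forall w, w <> pt M -> exists g j, In g gens /\ g <> pt M /\ w = titer M j g).
  { intros w Hw. destruct (Hgens w) as [E|[g [j [Hg E]]]]; [contradiction|].
    rewrite act_titer in E. exists g, j. split; auto. split; auto.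
    intro Eg. apply Hw. rewrite E, Eg. apply titer_pt. }
  exists (titer M B g0), (titer M (S B) g0).
  split; [apply Hvi; auto|].
  split; [split; [apply Hvi; auto|split; [apply Hvi; auto|reflexivity]]|].
  split; [intro i; unfold vertex; rewrite titer_add; apply Hvi; auto|].
  split; [intros i j E; rewrite !titer_add in E; apply Hinj in E; [lia|auto]|].
  split.
  - exists (flat_map (fun g => map (fun j => titer M j g) (seq 0 (B + S B))) gens).
    intros w Hw Hoff. destruct (Hrep w Hw) as [g [j [Hg [Hgv E]]]].
    destruct (Nat.lt_ge_cases j (B + S B)).
    + apply in_flat_map. exists g; split; auto. apply in_map_iff. exists j.
      split; [symmetry; exact E|apply in_seq; lia].
    + exfalso; apply Hoff. destruct (HB g Hg Hgv) as [n [m [Hn [Hm Enm]]]].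
      exists (j - n + m - S B). rewrite titer_add, E.
      replace (j - n + m - S B + S B) with (j - n + m) by lia.
      rewrite <- titer_add, <- Enm, titer_add. f_equal; lia.
  - intros w Hw Hoff. destruct (Hrep w Hw) as [g [j [Hg [Hgv E]]]].
    destruct (HB g Hg Hgv) as [n [m [Hn [Hm Enm]]]].
    destruct (Nat.le_gt_cases j n).
    + exists (n - j + (B - m)). split; [exact Hw|split; [apply Hvi; auto|]].
      rewrite E, titer_add. replace (n - j + (B - m) + j) with ((B - m) + n) by lia.
      rewrite <- titer_add, Enm, titer_add. f_equal; lia.
    + assert (Ew : titer M j g = titer M (j - n + m) g0).
      { transitivity (titer M (j - n) (titer M n g)).
        - rewrite titer_add; f_equal; lia.
        - rewrite Enm, titer_add; reflexivity. }
      destruct (Nat.le_gt_cases (j - n + m) B).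
      * exists (B - (j - n + m)). split; [exact Hw|split; [apply Hvi; auto|]].
        rewrite E, Ew, titer_add. f_equal; lia.
      * exfalso; apply Hoff. exists (j - n + m - S B).
        rewrite titer_add, E, Ew. f_equal; lia.
Qed.
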